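(* Let $V$ be a nonempty set, $E\subset V\times V$, $W\subset V$, $W^c=V\setminus W$. Then $$\Delta_{W^c}\,R_W^-\,(E_W^{-1})^*(E_W)^*\,R_W\,\Delta_{W^c}=\Delta_{W^c}\,A_W\,\Delta_{W^c}.$$
   Context: Relations on $V$: composition $RR'$: $x(RR')y$ iff there is $z$ with $xRz$ and $zR'y$; $R^{-1}$ is the converse; $R^0=\Delta$, $R^{n+1}=RR^n$, $R^+=\bigcup_{k\ge1}R^k$, $R^*=\bigcup_{k\ge0}R^k$. For $S\subset V$, $\Delta_S=\{(x,x):x\in S\}$, $\Delta=\Delta_V$. Definitions: $E_W=\Delta_{W^c}E$; $B_W=E(E_W)^*$; $B_W^-=(B_W)^{-1}=(E_W^{-1})^*E^{-1}$; $K_W=B_W^-\Delta_{W^c}B_W$; $C_W=(\Delta_WK_W\Delta_W)^+\cup\Delta_W$; $A_W=\Delta\cup B_W\cup B_W^-\cup K_W\cup(B_W\cup K_W)\,C_W\,(B_W^-\cup K_W^{-1})$; $R_W=\Delta\cup C_W(B_W^-\cup K_W^{-1})$; $R_W^-=\Delta\cup(B_W\cup K_W)C_W$. *)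

(* Defs.v *)
From Stdlib Require Import Arith.

Definition relation (V : Type) := V -> V -> Prop.

Section Rel.
Context {V : Type}.

Definition rcomp (R R' : relation V) : relation V :=
  fun x y => exists z, R x z /\ R' z y.
Definition rconv (R : relation V) : relation V := fun x y => R y x.
Definition runion (R R' : relation V) : relation V := fun x y => R x y \/ R' x y.
Definition rdiag : relation V := fun x y => x = y.
Definition rdiagS (S : V -> Prop) : relation V := fun x y => S x /\ x = y.
Fixpoint rpow (R : relation V) (n : nat) : relation V :=
  match n with
  | O => rdiag
  | S n => rcomp R (rpow R n)
  end.
Definition rplus (R : relation V) : relation V :=
  fun x y => exists k, 1 <= k /\ rpow R k x y.
Definition rstar (R : relation V) : relation V :=
  fun x y => exists k, rpow R k x y.
Definition req (R R' : relation V) : Prop := forall x y, R x y <-> R' x y.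

Variables (E : relation V) (W : V -> Prop).

Definition Wc : V -> Prop := fun x => ~ W x.
Definition E_W : relation V := rcomp (rdiagS Wc) E.
Definition B_W : relation V := rcomp E (rstar E_W).
Definition B_W_minus : relation V := rcomp (rstar (rconv E_W)) (rconv E).
Definition K_W : relation V := rcomp B_W_minus (rcomp (rdiagS Wc) B_W).
Definition C_W : relation V :=
  runion (rplus (rcomp (rdiagS W) (rcomp K_W (rdiagS W)))) (rdiagS W).
Definition A_W : relation V :=
  runion rdiag (runion B_W (runion B_W_minus (runion K_W
    (rcomp (runion B_W K_W) (rcomp C_W (runion B_W_minus (rconv K_W))))))).
Definition R_W : relation V :=
  runion rdiag (rcomp C_W (runion B_W_minus (rconv K_W))).
Definition R_W_minus : relation V :=
  runion rdiag (rcomp (runion B_W K_W) C_W).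

End Rel.

(* Main.v *)
Require Import Defs.
From Stdlib Require Import Arith Lia.

Section H.
Context {V : Type}.

Lemma rpow_add (R : relation V) m n x z y :
  rpow R m x z -> rpow R n z y -> rpow R (m + n) x y.
Proof.
  revert x; induction m as [|m IH]; simpl; intros x H1 H2.
  - unfold rdiag in H1; subst; exact H2.
  - destruct H1 as [w [H1 H3]]. exists w; split; [exact H1|eapply IH; eauto].
Qed.

Lemma rpow_snoc (R : relation V) n x y :
  rpow R (S n) x y <-> exists z, rpow R n x z /\ R z y.
Proof.
  revert x; induction n as [|n IH]; intros x.
  - simpl; unfold rcomp, rdiag; split.
    + intros [z [H1 H2]]; subst; exists x; auto.
    + intros [z [H1 H2]]; subst; exists y; auto.
  - split.
    + intros [w [H1 H2]]. apply IH in H2. destruct H2 as [z [H2 H3]].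
      exists z; split; auto. exists w; auto.
    + intros [z [[w [H1 H2]] H3]]. exists w; split; auto. apply IH. eauto.
Qed.

Lemma rpow_conv (R : relation V) n x y :
  rpow (rconv R) n x y <-> rpow R n y x.
Proof.
  revert x y; induction n as [|n IH]; intros x y.
  - simpl; unfold rdiag; split; auto.
  - rewrite (rpow_snoc R). simpl; unfold rcomp, rconv. split.
    + intros [z [H1 H2]]. exists z; split; auto. apply IH; auto.
    + intros [z [H1 H2]]. exists z; split; auto. apply IH; auto.
Qed.

Variables (E : relation V) (W : V -> Prop).

Lemma P_char x y : rstar (E_W E W) x y <-> x = y \/ (Wc W x /\ B_W E W x y).
Proof.
  split.
  - intros [k Hk]. destruct k as [|k]; simpl in Hk.
    + left; exact Hk.
    + destruct Hk as [z [[a [[Ha Hxa] Hz]] Hr]]. subst a.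
      right; split; auto. exists z; split; auto. exists k; auto.
  - intros [H|[Hw [z [Hz [k Hk]]]]].
    + subst; exists 0; reflexivity.
    + exists (S k). exists z; split; auto. exists x; split; auto. split; auto.
Qed.

Lemma Bm_iff x y : B_W_minus E W x y <-> B_W E W y x.
Proof.
  unfold B_W_minus, B_W, rcomp, rconv, rstar. split.
  - intros [z [[k Hk] H]]. exists z; split; auto. exists k. apply rpow_conv; auto.
  - intros [z [H [k Hk]]]. exists z; split; auto. exists k. apply rpow_conv; auto.
Qed.

Lemma Pm_char x y : rstar (rconv (E_W E W)) x y <-> y = x \/ (Wc W y /\ B_W E W y x).
Proof.
  rewrite <- P_char. unfold rstar. split; intros [k Hk]; exists k; apply rpow_conv; auto.
Qed.

Definition D := rcomp (rdiagS W) (rcomp (K_W E W) (rdiagS W)).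

Lemma D_last n x y : rpow D (S n) x y -> W y.
Proof.
  revert x; induction n as [|n IH]; intros x H.
  - destruct H as [z [[a [[Ha e] [b [_ [Hb e2]]]]] H2]]. simpl in H2; unfold rdiag in H2.
    subst; auto.
  - destruct H as [z [_ H2]]. eauto.
Qed.

Lemma C_char x y : C_W E W x y <-> W x /\ exists n, rpow D n x y.
Proof.
  unfold C_W, runion, rplus. split.
  - intros [[k [Hk H]]|[Hx e]].
    + destruct k as [|k]; [lia|]. split; [|exists (S k); exact H].
      destruct H as [z [[a [[Ha e] _]] _]]. subst; auto.
    + subst; split; auto. exists 0; reflexivity.
  - intros [Hx [n H]]. destruct n as [|n].
    + right; split; auto.
    + left; exists (S n); split; [lia|exact H].
Qed.

Lemma C_W_l x y : C_W E W x y -> W x.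
Proof. intros H; apply C_char in H; tauto. Qed.

Lemma C_W_r x y : C_W E W x y -> W y.
Proof.
  intros H; apply C_char in H. destruct H as [Hx [n H]]. destruct n as [|n].
  - simpl in H; unfold rdiag in H; subst; auto.
  - eapply D_last; eauto.
Qed.

Lemma C_refl x : W x -> C_W E W x x.
Proof. intros; apply C_char; split; auto; exists 0; reflexivity. Qed.

Lemma C_trans x y z : C_W E W x y -> C_W E W y z -> C_W E W x z.
Proof.
  intros H1 H2. apply C_char in H1; apply C_char in H2.
  destruct H1 as [Hx [m H1]]; destruct H2 as [_ [n H2]].
  apply C_char; split; auto. exists (m + n); eapply rpow_add; eauto.
Qed.

Lemma C_K x y : W x -> W y -> K_W E W x y -> C_W E W x y.
Proof.
  intros Hx Hy HK. apply C_char; split; auto. exists 1.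
  exists y; split; [|reflexivity].
  exists x; split; [split; auto|]. exists y; split; auto. split; auto.
Qed.

End H.

Theorem lemma5 (V : Type) (HV : inhabited V) (E : relation V) (W : V -> Prop) :
  req
    (rcomp (rdiagS (Wc W))
      (rcomp (R_W_minus E W)
        (rcomp (rstar (rconv (E_W E W)))
          (rcomp (rstar (E_W E W))
            (rcomp (R_W E W) (rdiagS (Wc W)))))))
    (rcomp (rdiagS (Wc W)) (rcomp (A_W E W) (rdiagS (Wc W)))).
Proof.
  intros x y. split.
  - intros [x' [[Hx e1] [u [HRm [v [Hm [w [Hp [t [HR [Hy e2]]]]]]]]]]].
    subst x' y.
    exists x; split; [split; auto|]. exists t; split; [|split; auto].
    apply Pm_char in Hm. apply P_char in Hp.
    unfold R_W_minus, R_W, runion, rdiag, rcomp in HRm, HR.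
    unfold A_W, runion, rdiag, rcomp.
    destruct HRm as [e|[c [Hq1 Hc1]]]; destruct HR as [e'|[d [Hc2 Hq2]]].
    + subst u w.
      destruct Hm as [e|[Hv Hb1]]; destruct Hp as [e'|[Hv' Hb2]].
      * subst; auto.
      * subst; auto.
      * subst; right; right; left; apply Bm_iff; auto.
      * right; right; right; left. exists v; split; [apply Bm_iff; auto|].
        exists v; split; [split; auto|auto].
    + subst u.
      destruct Hm as [e|[Hv Hb1]]; destruct Hp as [e'|[Hv' Hb2]].
      * subst. exfalso; apply Hx; eapply C_W_l; eauto.
      * subst. do 4 right. exists w; split; [left; auto|]. exists d; split; auto.
      * subst. exfalso; apply Hv; eapply C_W_l; eauto.
      * do 4 right. exists w; split.
        { right. exists v; split; [apply Bm_iff; auto|]. exists v; split; [split; auto|auto]. }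
        exists d; split; auto.
    + subst w.
      destruct Hm as [e|[Hv Hb1]]; destruct Hp as [e'|[Hv' Hb2]].
      * subst. exfalso; apply Hy; eapply C_W_r; eauto.
      * subst. exfalso; apply Hv'; eapply C_W_r; eauto.
      * subst. do 4 right. exists c; split; auto. exists u; split; auto.
        left; apply Bm_iff; auto.
      * do 4 right. exists c; split; auto. exists u; split; auto.
        right. exists v; split; [apply Bm_iff; auto|]. exists v; split; [split; auto|auto].
    + do 4 right. exists c; split; auto. exists d; split; auto.
      destruct Hm as [e|[Hv Hb1]]; destruct Hp as [e'|[Hv' Hb2]].
      * subst. eapply C_trans; eauto.
      * subst. exfalso; apply Hv'; eapply C_W_r; eauto.
      * subst. exfalso; apply Hv; eapply C_W_l; eauto.
      * eapply C_trans; [eassumption|]. eapply C_trans; [|eassumption].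
        apply C_K; [eapply C_W_r; eauto|eapply C_W_l; eauto|].
        exists v; split; [apply Bm_iff; auto|]. exists v; split; [split; auto|auto].
  - intros [x' [[Hx e1] [t [HA [Hy e2]]]]]. subst x' t.
    exists x; split; [split; auto|].
    unfold A_W, runion, rdiag, rcomp in HA.
    destruct HA as [e|[Hb|[Hbm|[HK|[c [Hq1 [d [Hc Hq2]]]]]]]].
    + subst. exists y; split; [left; reflexivity|].
      exists y; split; [apply Pm_char; auto|]. exists y; split; [apply P_char; auto|].
      exists y; split; [left; reflexivity|split; auto].
    + exists x; split; [left; reflexivity|].
      exists x; split; [apply Pm_char; auto|]. exists y; split; [apply P_char; auto|].
      exists y; split; [left; reflexivity|split; auto].
    + apply Bm_iff in Hbm.
      exists x; split; [left; reflexivity|].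
      exists y; split; [apply Pm_char; auto|]. exists y; split; [apply P_char; auto|].
      exists y; split; [left; reflexivity|split; auto].
    + destruct HK as [a [Hb1 [a' [[Ha e] Hb2]]]]. subst a'. apply Bm_iff in Hb1.
      exists x; split; [left; reflexivity|].
      exists a; split; [apply Pm_char; auto|]. exists y; split; [apply P_char; auto|].
      exists y; split; [left; reflexivity|split; auto].
    + exists c; split.
      { right. exists c; split; auto. apply C_refl; eapply C_W_l; eauto. }
      exists c; split; [apply Pm_char; auto|]. exists c; split; [apply P_char; auto|].
      exists y; split; [|split; auto]. right. exists d; auto.
Qed.
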